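(* Consider a degree-corrected stochastic block model with $K$ communities, membership matrix $\Theta\in\mathbb M_{n,K}$ (every community nonempty), symmetric $B\in[0,1]^{K\times K}$ with $\mathrm{rank}(B)=K'<K$, and node propensities $\vartheta\in\mathbb R^n_{+}$ with $\max_{i\in G_k}\vartheta_i=1$ for each $k$. Let $P=\mathrm{diag}(\vartheta)\Theta B\Theta^\intercal\mathrm{diag}(\vartheta)=U\Sigma U^\intercal$ be its eigenvalue decomposition with $U\in\mathbb R^{n\times K'}$. Let $\phi_k\in\mathbb R^n$ agree with $\vartheta$ on $G_k$ and be zero elsewhere, $\Omega=\mathrm{diag}(\|\phi_1\|_2,\dots,\|\phi_K\|_2)$, $\bar B=\Omega B\Omega$, and $\bar B=HDH^\intercal$ its eigenvalue decomposition with $H\in\mathbb R^{K\times K'}$. Suppose there exist deterministic positive sequences $\{\eta'_n\},\{\underline\iota_n\},\{\overline\iota_n\},\{\beta_n\}$ such that $\min_{1\le k<l\le K}\bar B_{kk}\bar B_{ll}-\bar B_{kl}^2\ge\eta'_n>0$, $0<\underline\iota_n<\Sigma_{ii}<\overline\iota_n$ for all $1\le i\le K'$, and $0<\min_k\bar B_{kk}\le\max_k\bar B_{kk}\le\beta_n$. Then $$\max_{k\ne l}\cos(H_{k\ast},H_{l\ast})\le\xi'_n\quad\text{with}\quad\xi'_n=\sqrt{1-\frac{\eta'_n}{\overline\iota_n\beta_n^2/\underline\iota_n}}.$$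
   Context: $\mathbb M_{n,K}$: $n\times K$ 0/1 matrices with exactly one $1$ per row; $G_k$ is the set of nodes whose row has its $1$ in column $k$. $M_{k\ast}$ denotes the $k$-th row. $\cos(a,b)=a^\intercal b/(\|a\|_2\|b\|_2)$. *)

(* Defs.v *)
From HB Require Import structures.
From mathcomp Require Import all_boot all_order all_algebra.
Set Implicit Arguments. Unset Strict Implicit. Unset Printing Implicit Defensive.
Import Order.TTheory GRing.Theory Num.Theory.
Local Open Scope ring_scope.

Definition dotv (R : rcfType) (m : nat) (a b : 'rV[R]_m) : R := \sum_(j < m) a 0 j * b 0 j.
Definition norm2 (R : rcfType) (m : nat) (a : 'rV[R]_m) : R := Num.sqrt (dotv a a).
Definition cosv (R : rcfType) (m : nat) (a b : 'rV[R]_m) : R := dotv a b / (norm2 a * norm2 b).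

Definition is_membership (R : rcfType) (n K : nat) (Theta : 'M[R]_(n, K)) : Prop :=
  (forall i k, Theta i k = 0 \/ Theta i k = 1) /\
  (forall i, #|[set k | Theta i k == 1]| = 1%N).

Definition community (R : rcfType) (n K : nat) (Theta : 'M[R]_(n, K)) (k : 'I_K) : {set 'I_n} :=
  [set i | Theta i k == 1].

Definition phi (R : rcfType) (n K : nat) (Theta : 'M[R]_(n, K)) (theta : 'rV[R]_n) (k : 'I_K)
  : 'rV[R]_n := \row_i (if i \in community Theta k then theta 0 i else 0).

Definition Omega (R : rcfType) (n K : nat) (Theta : 'M[R]_(n, K)) (theta : 'rV[R]_n) : 'M[R]_K :=
  diag_mx (\row_k norm2 (phi Theta theta k)).

Definition Bbar (R : rcfType) (n K : nat) (Theta : 'M[R]_(n, K)) (theta : 'rV[R]_n) (B : 'M[R]_K)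
  : 'M[R]_K := Omega Theta theta *m B *m Omega Theta theta.

Definition Pmat (R : rcfType) (n K : nat) (Theta : 'M[R]_(n, K)) (theta : 'rV[R]_n) (B : 'M[R]_K)
  : 'M[R]_n := diag_mx theta *m Theta *m B *m Theta^T *m diag_mx theta.

(* Main.v *)
Require Import Defs.
From HB Require Import structures.
From mathcomp Require Import all_boot all_order all_algebra.
From mathcomp Require Import ring lra.
Import Order.TTheory GRing.Theory Num.Theory.
Local Open Scope ring_scope.

Lemma form_entry (R : rcfType) m p q (A : 'M[R]_(m, p)) (C : 'M[R]_p) (E : 'M[R]_(q, p)) k l :
  (row k A *m C *m (row l E)^T) 0 0 = (A *m C *m E^T) k l.
Proof. by rewrite -row_mul !mxE; apply: eq_bigr => j _; rewrite !mxE. Qed.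

Lemma form_sym (R : rcfType) p (M : 'M[R]_p) (a b : 'rV[R]_p) :
  M^T = M -> (a *m M *m b^T) 0 0 = (b *m M *m a^T) 0 0.
Proof.
move=> hM.
have e : (a *m M *m b^T) 0 0 = (a *m M *m b^T)^T 0 0.
  by rewrite [RHS]mxE.
rewrite e.
by rewrite !trmx_mul trmxK hM mulmxA.
Qed.

Lemma form_expand (R : rcfType) p (M : 'M[R]_p) (a b : 'rV[R]_p) t :
  M^T = M ->
  ((b - t *: a) *m M *m (b - t *: a)^T) 0 0 =
  (b *m M *m b^T) 0 0 - 2 * t * (a *m M *m b^T) 0 0 + t ^+ 2 * (a *m M *m a^T) 0 0.
Proof.
move=> hM.
have h := @form_sym _ _ M b a hM.
rewrite !mulmxBl linearB /= linearZ /= !mulmxBr -!scalemxAl -!scalemxAr.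
rewrite !(mxE, mxE) /=.
move: h; rewrite !mxE => ->.
ring.
Qed.

Lemma dotvE (R : rcfType) m (a b : 'rV[R]_m) : dotv a b = (a *m b^T) 0 0.
Proof. by rewrite /dotv !mxE; apply: eq_bigr => j _; rewrite mxE. Qed.
Lemma scal {R : rcfType} (A Bn c p q r eta lo hi beta : R) :
  0 < lo -> 0 < hi -> 0 < p -> p <= beta -> 0 < q -> q <= beta ->
  eta <= p * q - r ^+ 2 -> 0 < eta ->
  lo * Bn <= q -> p <= hi * A -> q <= hi * Bn ->
  (forall t, q - 2 * t * r + t ^+ 2 * p <= hi * (Bn - 2 * t * c + t ^+ 2 * A)) ->
  c ^+ 2 / (A * Bn) <= 1 - eta / (hi * beta ^+ 2 / lo).
Proof.
move=> lo0 hi0 p0 pb q0 qb he e0 lB pA qB ht.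
have A0 : 0 < A by rewrite -(pmulr_rgt0 _ hi0); exact: lt_le_trans p0 pA.
have B0 : 0 < Bn by rewrite -(pmulr_rgt0 _ hi0); exact: lt_le_trans q0 qB.
have := ht (c / A) => h1.
have h2 : A * (p * q - r ^+ 2) <= p * hi * (A * Bn - c ^+ 2).
  have e1 : p * (q - 2 * (c / A) * r + (c / A) ^+ 2 * p) - (p * q - r ^+ 2) = (p * (c/A) - r) ^+ 2 by ring.
  have e2 : Bn - 2 * (c / A) * c + (c / A) ^+ 2 * A = (A * Bn - c ^+ 2) / A.
    by field; rewrite gt_eqF.
  rewrite e2 in h1.
  have h3 : p * q - r ^+ 2 <= p * (hi * ((A * Bn - c ^+ 2) / A)).
    apply: le_trans (ler_wpM2l (ltW p0) h1).
    by rewrite -subr_ge0 e1 sqr_ge0.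
  have := ler_wpM2l (ltW A0) h3.
  suff -> : A * (p * (hi * ((A * Bn - c ^+ 2) / A))) = p * hi * (A * Bn - c ^+ 2) by [].
  by field; rewrite gt_eqF.
have dpos : 0 <= A * Bn - c ^+ 2.
  have : 0 <= p * hi * (A * Bn - c ^+ 2) by apply: le_trans h2; nra.
  by rewrite pmulr_rge0 // mulr_gt0.
have key : eta * lo * (A * Bn) <= hi * beta ^+ 2 * (A * Bn - c ^+ 2).
  set d := A * Bn - c ^+ 2 in h2 dpos *.
  have s1 : eta * lo * (A * Bn) <= A * (p * q - r ^+ 2) * (lo * Bn).
    have -> : eta * lo * (A * Bn) = eta * (A * (lo * Bn)) by ring.
    have -> : A * (p * q - r ^+ 2) * (lo * Bn) = (p * q - r ^+ 2) * (A * (lo * Bn)) by ring.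
    by apply: ler_wpM2r => //; rewrite mulr_ge0 ?mulr_ge0 // ltW.
  apply: (le_trans s1).
  have s2 : A * (p * q - r ^+ 2) * (lo * Bn) <= p * hi * d * (lo * Bn).
    by apply: ler_wpM2r => //; rewrite mulr_ge0 // ltW.
  apply: (le_trans s2).
  have s3 : p * hi * d * (lo * Bn) <= p * hi * d * q.
    by apply: ler_wpM2l => //; rewrite mulr_ge0 // mulr_ge0 // ltW.
  apply: (le_trans s3).
  have pq : p * q <= beta ^+ 2 by rewrite expr2; apply: ler_pM => //; apply: ltW.
  have -> : p * hi * d * q = (p * q) * (hi * d) by ring.
  have -> : hi * beta ^+ 2 * d = beta ^+ 2 * (hi * d) by ring.
  by apply: ler_wpM2r => //; rewrite mulr_ge0 // ltW.
have b0 : 0 < beta by apply: lt_le_trans pb.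
rewrite -subr_ge0.
have -> : 1 - eta / (hi * beta ^+ 2 / lo) - c ^+ 2 / (A * Bn) =
   (hi * beta ^+ 2 * (A * Bn - c ^+ 2) - eta * lo * (A * Bn)) / (hi * beta ^+ 2 * (A * Bn)).
  by field; rewrite !gt_eqF // ?mulr_gt0 ?exprn_gt0.
by rewrite divr_ge0 ?subr_ge0 // ltW // !mulr_gt0 ?exprn_gt0.
Qed.

Lemma memb_prod (R : rcfType) n K (Theta : 'M[R]_(n, K)) i k l :
  is_membership Theta -> k != l -> Theta i k * Theta i l = 0.
Proof.
move=> [h01 hc] kl.
case: (h01 i k) => [->|hk]; first by rewrite mul0r.
case: (h01 i l) => [->|hl]; first by rewrite mulr0.
have : [set k; l] \subset [set k0 | Theta i k0 == 1].
  by apply/subsetP => x; rewrite !inE => /orP [] /eqP ->; rewrite ?hk ?hl eqxx.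
move/subset_leq_card; rewrite hc cards2 kl //.
Qed.

Lemma memb_sq (R : rcfType) n K (Theta : 'M[R]_(n, K)) i k :
  is_membership Theta -> Theta i k * Theta i k = Theta i k.
Proof. by move=> [h01 _]; case: (h01 i k) => ->; rewrite ?mul0r ?mul1r. Qed.

Lemma norm2_phi_sq (R : rcfType) n K (Theta : 'M[R]_(n, K)) (theta : 'rV[R]_n) k :
  is_membership Theta ->
  norm2 (phi Theta theta k) ^+ 2 = \sum_i theta 0 i ^+ 2 * Theta i k.
Proof.
move=> [h01 hc].
have ge : 0 <= dotv (phi Theta theta k) (phi Theta theta k).
  by apply: sumr_ge0 => i _; rewrite -expr2 sqr_ge0.
rewrite /norm2 sqr_sqrtr // /dotv; apply: eq_bigr => i _.
rewrite !mxE /community inE.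
case: (h01 i k) => ->; rewrite ?eqxx ?mulr1 ?mulr0 ?expr2 //.
by rewrite eq_sym oner_eq0 mulr0.
Qed.

Lemma norm2_phi_gt0 (R : rcfType) n K (Theta : 'M[R]_(n, K)) (theta : 'rV[R]_n) k :
  (forall i, 0 < theta 0 i) ->
  (exists2 i, i \in community Theta k & theta 0 i = 1) ->
  0 < norm2 (phi Theta theta k).
Proof.
move=> hpos [i0 hi0 ht0].
rewrite /norm2 sqrtr_gt0 /dotv (bigD1 i0) //=.
apply: (lt_le_trans (y := phi Theta theta k 0 i0 * phi Theta theta k 0 i0)).
  by rewrite !mxE hi0 ht0 mulr1.
rewrite lerDl; apply: sumr_ge0 => i _; rewrite -expr2 sqr_ge0 //.
Qed.

Lemma quad_diag (R : rcfType) m (y : 'rV[R]_m) (s : 'rV[R]_m) :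
  (y *m diag_mx s *m y^T) 0 0 = \sum_j y 0 j ^+ 2 * s 0 j.
Proof.
rewrite mul_mx_diag !mxE; apply: eq_bigr => j _; rewrite !mxE; ring.
Qed.

Lemma quad_id (R : rcfType) m (y : 'rV[R]_m) :
  (y *m y^T) 0 0 = \sum_j y 0 j ^+ 2.
Proof. by rewrite !mxE; apply: eq_bigr => j _; rewrite !mxE expr2. Qed.

Theorem lemma4 (R : rcfType) (n K K' : nat)
  (Theta : 'M[R]_(n, K)) (B : 'M[R]_K) (theta : 'rV[R]_n)
  (U : 'M[R]_(n, K')) (Sigma : 'M[R]_K') (H : 'M[R]_(K, K')) (D : 'M[R]_K')
  (eta iota_lo iota_hi beta : R) :
  is_membership Theta ->
  (forall k, community Theta k != set0) ->
  B^T = B ->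
  (forall k l, 0 <= B k l <= 1) ->
  \rank B = K' -> (K' < K)%N ->
  (forall i, 0 < theta 0 i) ->
  (forall k, (exists2 i, i \in community Theta k & theta 0 i = 1) /\
             (forall i, i \in community Theta k -> theta 0 i <= 1)) ->
  (* eigenvalue decomposition P = U Sigma U^T *)
  U^T *m U = 1%:M -> is_diag_mx Sigma -> Pmat Theta theta B = U *m Sigma *m U^T ->
  (* eigenvalue decomposition Bbar = H D H^T *)
  H^T *m H = 1%:M -> is_diag_mx D -> Bbar Theta theta B = H *m D *m H^T ->
  0 < eta -> 0 < iota_lo -> 0 < iota_hi -> 0 < beta ->
  (forall k l : 'I_K, (k < l)%N ->
     Bbar Theta theta B k k * Bbar Theta theta B l l - (Bbar Theta theta B k l) ^+ 2 >= eta) ->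
  (forall i, iota_lo < Sigma i i < iota_hi) ->
  (forall k, 0 < Bbar Theta theta B k k /\ Bbar Theta theta B k k <= beta) ->
  forall k l : 'I_K, k != l ->
    cosv (row k H) (row l H) <= Num.sqrt (1 - eta / (iota_hi * beta ^+ 2 / iota_lo)).
Proof.
move=> hmem hne hBs hB01 hrk hK' hpos hmax hU hSd hP hH hDd hBb he0 hlo0 hhi0 hb0 heta hSig hBbd k l kl.
pose om := fun k0 => norm2 (phi Theta theta k0).
have om0 : forall k0, 0 < om k0.
  by move=> k0; apply: norm2_phi_gt0 => //; case: (hmax k0).
pose Om := Omega Theta theta.
pose Oi := diag_mx (\row_k0 (om k0)^-1).
have OmOi : Om *m Oi = 1%:M.
  apply/matrixP => i j; rewrite /Om /Omega mul_diag_mx !mxE.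
  case: (eqVneq i j) => [->|ij]; rewrite ?eqxx ?mulr1n ?mulr0n ?mulr0 //.
  by rewrite mulfV // gt_eqF // om0.
have OiOm : Oi *m Om = 1%:M.
  apply/matrixP => i j; rewrite /Om /Omega mul_diag_mx !mxE.
  case: (eqVneq i j) => [->|ij]; rewrite ?eqxx ?mulr1n ?mulr0n ?mulr0 //.
  by rewrite mulVf // gt_eqF // om0.
pose Z := diag_mx theta *m Theta *m Oi.
have ZE : forall i k0, Z i k0 = theta 0 i * Theta i k0 * (om k0)^-1.
  by move=> i k0; rewrite /Z mul_mx_diag mul_diag_mx !mxE.
have ZtZ : Z^T *m Z = 1%:M.
  apply/matrixP => k0 l0; rewrite !mxE.
  under eq_bigr => i _ do rewrite mxE !ZE.
  case: (eqVneq k0 l0) => [<-|kl0]; rewrite ?eqxx ?mulr1n ?mulr0n.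
    transitivity (\sum_i (theta 0 i ^+ 2 * Theta i k0) * (om k0)^-1 ^+ 2).
      apply: eq_bigr => i _.
      have hs := @memb_sq _ _ _ Theta i k0 hmem.
      transitivity (theta 0 i ^+ 2 * (Theta i k0 * Theta i k0) * (om k0)^-1 ^+ 2); first by ring.
      by rewrite hs.
    rewrite -mulr_suml -norm2_phi_sq // -/(om k0) -exprMn mulfV ?expr1n //.
    by rewrite gt_eqF.
  apply: big1 => i _.
  transitivity (theta 0 i * theta 0 i * (om k0)^-1 * (om l0)^-1 * (Theta i k0 * Theta i l0)); first by ring.
  by rewrite (@memb_prod _ _ _ Theta i k0 l0 hmem kl0) mulr0.
have ZOm : Z *m Om = diag_mx theta *m Theta by rewrite /Z -mulmxA OiOm mulmx1.
have PZ : Pmat Theta theta B = Z *m Bbar Theta theta B *m Z^T.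
  have OmZt : Om *m Z^T = (Z *m Om)^T.
    by rewrite [RHS]trmx_mul /Om /Omega tr_diag_mx.
  rewrite /Bbar -/Om !mulmxA ZOm -(mulmxA _ Om) OmZt ZOm trmx_mul tr_diag_mx.
  by rewrite /Pmat !mulmxA.
pose W := Z *m H.
have WtW : W^T *m W = 1%:M.
  by rewrite /W trmx_mul mulmxA -(mulmxA H^T) ZtZ mulmx1 hH.
have WDW : W *m D *m W^T = U *m Sigma *m U^T.
  by rewrite -hP PZ hBb /W trmx_mul !mulmxA.
clearbody W.
have Dunit : D \in unitmx.
  rewrite -row_free_unit /row_free; apply/eqP/anti_leq; rewrite rank_leq_row /=.
  have BE : B = Oi *m (H *m D *m H^T) *m Oi.
    by rewrite -hBb /Bbar -/Om !mulmxA OiOm mul1mx -mulmxA OmOi mulmx1.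
  rewrite -{1}hrk BE.
  apply: (leq_trans (mxrankM_maxl _ _)).
  apply: (leq_trans (mxrankM_maxr _ _)).
  apply: (leq_trans (mxrankM_maxl _ _)).
  exact: mxrankM_maxr.
have [s hs] := diag_mxP _ hSd.
have [dd hdd] := diag_mxP _ hDd.
have DT : D^T = D by rewrite hdd tr_diag_mx.
have quad : forall x : 'rV_K',
  iota_lo * (x *m x^T) 0 0 <= (x *m D *m x^T) 0 0 <= iota_hi * (x *m x^T) 0 0.
  move=> x.
  pose y := x *m invmx D *m W^T *m U *m Sigma.
  have hy : y *m U^T = x *m W^T.
    have -> : y *m U^T = x *m invmx D *m W^T *m (U *m Sigma *m U^T) by rewrite /y !mulmxA.
    rewrite -WDW.
    have -> : x *m invmx D *m W^T *m (W *m D *m W^T) = x *m (invmx D *m (W^T *m W) *m D) *m W^T.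
      by rewrite !mulmxA.
    by rewrite WtW mulmx1 mulVmx // mulmx1.
  have e1 : x *m D *m x^T = y *m Sigma *m y^T.
    have -> : x *m D *m x^T = (x *m W^T) *m (W *m D *m W^T) *m (x *m W^T)^T.
      rewrite trmx_mul trmxK.
      have -> : x *m W^T *m (W *m D *m W^T) *m (W *m x^T) = x *m (W^T *m W) *m D *m (W^T *m W) *m x^T.
        by rewrite !mulmxA.
      by rewrite WtW !mulmx1.
    rewrite -hy trmx_mul trmxK WDW.
    have -> : y *m U^T *m (U *m Sigma *m U^T) *m (U *m y^T) = y *m (U^T *m U) *m Sigma *m (U^T *m U) *m y^T.
      by rewrite !mulmxA.
    by rewrite hU !mulmx1.
  have e2 : x *m x^T = y *m y^T.
    have -> : x *m x^T = (x *m W^T) *m (x *m W^T)^T.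
      by rewrite trmx_mul trmxK mulmxA -(mulmxA x) WtW mulmx1.
    by rewrite -hy trmx_mul trmxK mulmxA -(mulmxA y) hU mulmx1.
  have sj : forall j, iota_lo <= s 0 j <= iota_hi.
    by move=> j; have := hSig j; rewrite hs !mxE eqxx mulr1n => /andP [h1 h2]; rewrite !ltW.
  rewrite e1 e2 hs quad_diag quad_id !mulr_sumr; apply/andP; split; apply: ler_sum => j _.
    by rewrite mulrC ler_wpM2l ?sqr_ge0 //; case/andP: (sj j).
  by rewrite [iota_hi * _]mulrC ler_wpM2l ?sqr_ge0 //; case/andP: (sj j).
pose a := row k H. pose b := row l H.
have pE : forall k0 l0, (row k0 H *m D *m (row l0 H)^T) 0 0 = Bbar Theta theta B k0 l0.
  by move=> k0 l0; rewrite form_entry hBb.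
set BB := Bbar Theta theta B in heta hBbd hBb pE *.
have sym : BB k l = BB l k by rewrite -!pE form_sym.
have heta' : eta <= BB k k * BB l l - BB k l ^+ 2.
  case: (ltngtP k l) => [lt|gt|eq]; first exact: heta.
    by rewrite mulrC sym; exact: heta.
  by move: kl; rewrite (val_inj eq) eqxx.
have q1 := quad a. have q2 := quad b.
rewrite /a /b !pE -/a -/b -!dotvE in q1 q2.
have ht : forall t, BB l l - 2 * t * BB k l + t ^+ 2 * BB k k <=
    iota_hi * (dotv b b - 2 * t * dotv a b + t ^+ 2 * dotv a a).
  move=> t; have /andP [_ h] := quad (b - t *: a).
  rewrite form_expand // /a /b !pE -/a -/b in h.
  have E1 := @form_expand R K' 1%:M a b t (trmx1 _ _).
  rewrite !mulmx1 in E1.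
  by rewrite E1 -!dotvE in h.
have [p0 pb] := hBbd k. have [q0 qb] := hBbd l.
case/andP: q1 => q1a q1b. case/andP: q2 => q2a q2b.
have hsc := @scal R (dotv a a) (dotv b b) (dotv a b) (BB k k) (BB l l) (BB k l) eta iota_lo iota_hi beta hlo0 hhi0 p0 pb q0 qb heta' he0 q2a q1b q2b ht.
have A0 : 0 < dotv a a by rewrite -(pmulr_rgt0 _ hhi0); exact: lt_le_trans p0 q1b.
have B0 : 0 < dotv b b by rewrite -(pmulr_rgt0 _ hhi0); exact: lt_le_trans q0 q2b.
rewrite /cosv /norm2 -/a -/b.
have den0 : 0 < Num.sqrt (dotv a a) * Num.sqrt (dotv b b) by rewrite mulr_gt0 // sqrtr_gt0.
case: (lerP (dotv a b) 0) => hc.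
  apply: le_trans (sqrtr_ge0 _).
  by rewrite ler_pdivrMr // mul0r.
have cge : 0 <= dotv a b / (Num.sqrt (dotv a a) * Num.sqrt (dotv b b)).
  by rewrite divr_ge0 // ?ltW.
rewrite -(ger0_norm cge) -sqrtr_sqr.
have e : (dotv a b / (Num.sqrt (dotv a a) * Num.sqrt (dotv b b))) ^+ 2 = dotv a b ^+ 2 / (dotv a a * dotv b b).
  by rewrite expr_div_n exprMn !sqr_sqrtr ?ltW.
rewrite e; exact: (ler_wsqrtr hsc).
Qed.
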